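(* Let $k\le l$ be positive integers with $\gcd(k,l)=1$, let $n\ge1$ and $q\ge 0$ be integers, and let $m=qn$ (i.e. the remainder of $m$ modulo $n$ is $r=0$). Then $L^{k,l}(m,n)=nkq$, and this value is attained at the $nk\times nl$ matrix all of whose entries equal $q$.
   Context: $\mathcal D^{k,l}(m,n)$ denotes the set of all $nk\times nl$ matrices with nonnegative integer entries all of whose row sums equal $ml$ and all of whose column sums equal $mk$. For an $s\times t$ matrix $A=(a_{ij})$ with $s\le t$, a transversal of $A$ is a set of entries $T=\{a_{1i_1},\dots,a_{si_s}\}$ with $i_1,\dots,i_s\in\{1,\dots,t\}$ pairwise distinct, and $|T|=a_{1i_1}+\cdots+a_{si_s}$; if $s>t$, the transversals of $A$ are those of its transpose. The tropical determinant is ${\rm tdet}(A)=\max_T|T|$, and $L^{k,l}(m,n)=\min_{A\in\mathcal D^{k,l}(m,n)}{\rm tdet}(A)$. *)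

(* Defs.v *)
From mathcomp Require Import all_boot all_order all_algebra.
Set Implicit Arguments. Unset Strict Implicit. Unset Printing Implicit Defensive.

Definition inD (k l m n : nat) (A : 'M[nat]_(n * k, n * l)) : Prop :=
  (forall i, \sum_(j < n * l) A i j = m * l) /\
  (forall j, \sum_(i < n * k) A i j = m * k).
Arguments inD : clear implicits.

Definition tdet (s t : nat) (A : 'M[nat]_(s, t)) : nat :=
  if s <= t then
    \max_(f : {ffun 'I_s -> 'I_t} | injectiveb f) \sum_(i < s) A i (f i)
  else
    \max_(g : {ffun 'I_t -> 'I_s} | injectiveb g) \sum_(j < t) A (g j) j.
Arguments tdet {s t} A.

Definition L_is (k l m n v : nat) : Prop :=
  (exists A : 'M[nat]_(n * k, n * l), inD k l m n A /\ tdet A = v) /\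
  (forall A : 'M[nat]_(n * k, n * l), inD k l m n A -> v <= tdet A).

(* Main.v *)
Require Import Defs.
From mathcomp Require Import all_boot all_order all_algebra.
From mathcomp Require Import zify.

Lemma tdet_ge s N (A : 'M[nat]_(s, N)) c : 0 < N -> s <= N ->
  (forall i, \sum_(j < N) A i j = c) -> s * c <= N * tdet A.
Proof.
move=> N0 sN rs.
pose sh (t : 'I_N) : {ffun 'I_s -> 'I_N} :=
  [ffun i : 'I_s => Ordinal (ltn_pmod (val i + t) N0)].
have shinj t : injectiveb (sh t).
  apply/injectiveP => i i'; rewrite !ffunE => /(congr1 val) /= /eqP.
  rewrite eqn_modDr !modn_small; last 2 first.
  - exact: leq_trans (ltn_ord i') sN.
  - exact: leq_trans (ltn_ord i) sN.
  by move/eqP => h; apply: val_inj.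
have -> : s * c = \sum_(t < N) \sum_(i < s) A i (sh t i).
  rewrite exchange_big /=.
  transitivity (\sum_(i < s) c); first by rewrite sum_nat_const card_ord.
  apply: eq_bigr => i _; rewrite -(rs i).
  have hinj : injective (fun t : 'I_N => Ordinal (ltn_pmod (val i + t) N0)).
    move=> t t' /(congr1 val) /= /eqP.
    rewrite eqn_modDl !modn_small //; by move/eqP => h; apply: val_inj.
  rewrite (reindex_inj hinj) /=.
  by apply: eq_bigr => t _; rewrite ffunE.
rewrite /tdet sN -[N in N * _]card_ord -sum_nat_const.
apply: leq_sum => t _.
by apply: (@leq_bigmax_cond _ (fun f : {ffun 'I_s -> 'I_N} => injectiveb f)) .
Qed.

Theorem corollary4p1 (k l n q m : nat) :
  0 < k -> k <= l -> coprime k l -> 0 < n -> m = q * n ->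
  L_is k l m n (n * k * q) /\
  inD k l m n (const_mx q : 'M[nat]_(n * k, n * l)) /\
  tdet (const_mx q : 'M[nat]_(n * k, n * l)) = n * k * q.
Proof.
move=> k0 kl _ n0 ->.
have N0 : 0 < n * l by rewrite muln_gt0 n0 (leq_trans k0 kl).
have sN : n * k <= n * l by rewrite leq_mul2l kl orbT.
have inDc : inD k l (q * n) n (const_mx q : 'M[nat]_(n * k, n * l)).
  split=> [i|j].
    under eq_bigr do rewrite mxE.
    by rewrite sum_nat_const card_ord; lia.
  under eq_bigr do rewrite mxE.
  by rewrite sum_nat_const card_ord; lia.
have tdc : tdet (const_mx q : 'M[nat]_(n * k, n * l)) = n * k * q.
  apply/eqP; rewrite eqn_leq; apply/andP; split.
    rewrite /tdet sN; apply/bigmax_leqP => f _.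
    under eq_bigr do rewrite mxE.
    by rewrite sum_nat_const card_ord.
  have := @tdet_ge _ _ (const_mx q : 'M[nat]_(n * k, n * l)) (n * l * q) N0 sN.
  have -> : forall x y : nat, x * (y * q) = y * (x * q) by move=> x y; lia.
  rewrite leq_pmul2l //; apply=> i.
  under eq_bigr do rewrite mxE.
  by rewrite sum_nat_const card_ord.
split; last by [].
split; first by exists (const_mx q).
move=> A [rs _].
have := @tdet_ge _ _ A (q * n * l) N0 sN rs.
have -> : n * k * (q * n * l) = n * l * (n * k * q) by lia.
by rewrite leq_pmul2l.
Qed.
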